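(* Consider a one-site PTM cascade with $n=1$ layer (species $E,S^0,S^1,F,Y^0,Y^1$, constants $\delta,\gamma,\lambda$) and positive total amounts $\overline{E},\overline{F},\overline{S}$. Let $\Delta=\gamma\overline{F}-\delta\overline{E}$, $q_1(s)=1+\delta s$, $q_2(s)=\overline{E}-\Delta s$, $p(s)=\lambda\overline{F}q_1(s)+q_1(s)q_2(s)+(\gamma+\delta)\overline{F}q_2(s)$, and $\varphi(s)=\frac{s\,p(s)}{q_1(s)q_2(s)}$. Let $\Gamma=[0,\infty)$ if $\Delta\le0$ and $\Gamma=[0,\overline{E}/\Delta)$ if $\Delta>0$. Then: (i) the system has a unique BMSS; (ii) the restriction of $\varphi$ to $\Gamma$ is a continuous increasing bijection $\Gamma\to[0,\infty)$, and its inverse $\psi:[0,\infty)\to\Gamma$ is continuous, increasing, satisfies $\psi(0)=0$, and for every $\overline{S}>0$ the BMSS value of $S^1$ equals $\psi(\overline{S})$.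
   Context: For $n=1$ the one-site PTM cascade has species $E,S^0,S^1,F,Y^0,Y^1$ with reactions $E+S^0\rightleftharpoons Y^0\to E+S^1$ (rate constants $a^0,b^0,c^0$) and $F+S^1\rightleftharpoons Y^1\to F+S^0$ (rate constants $a^1,b^1,c^1$), all positive, mass-action kinetics. Put $\delta=a^1/(b^1+c^1)$, $\gamma=(c^1/c^0)\delta$, $\lambda=\frac{b^0+c^0}{a^0}\gamma$. A steady state for total amounts $\overline{E},\overline{F},\overline{S}$ is a real solution of $Y^0=\gamma FS^1$, $Y^1=\delta FS^1$, $\lambda FS^1=S^0E$, $\overline{F}=F+Y^1$, $\overline{E}=E+Y^0$, $\overline{S}=S^0+S^1+Y^0+Y^1$. A BMSS (biologically meaningful steady state) is a steady state with positive total amounts and all concentrations nonnegative. A function is called increasing if it is strictly increasing. *)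

(* Defs.v *)
From Stdlib Require Export Reals.
Open Scope R_scope.

Definition delta (a0 b0 c0 a1 b1 c1 : R) : R := a1 / (b1 + c1).
Definition gamma (a0 b0 c0 a1 b1 c1 : R) : R := (c1 / c0) * (delta a0 b0 c0 a1 b1 c1).
Definition lambda (a0 b0 c0 a1 b1 c1 : R) : R := ((b0 + c0) / a0) * (gamma a0 b0 c0 a1 b1 c1).

Definition steady_state (a0 b0 c0 a1 b1 c1 : R) (Eb Fb Sb E S0 S1 F Y0 Y1 : R) : Prop :=
  Y0 = (gamma a0 b0 c0 a1 b1 c1) * F * S1 /\
  Y1 = (delta a0 b0 c0 a1 b1 c1) * F * S1 /\
  (lambda a0 b0 c0 a1 b1 c1) * F * S1 = S0 * E /\
  Fb = F + Y1 /\
  Eb = E + Y0 /\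
  Sb = S0 + S1 + Y0 + Y1.

Definition BMSS (a0 b0 c0 a1 b1 c1 : R) (Eb Fb Sb E S0 S1 F Y0 Y1 : R) : Prop :=
  0 < Eb /\ 0 < Fb /\ 0 < Sb /\
  (steady_state a0 b0 c0 a1 b1 c1) Eb Fb Sb E S0 S1 F Y0 Y1 /\
  0 <= E /\ 0 <= S0 /\ 0 <= S1 /\ 0 <= F /\ 0 <= Y0 /\ 0 <= Y1.

Definition Delta (a0 b0 c0 a1 b1 c1 : R) (Eb Fb : R) : R := (gamma a0 b0 c0 a1 b1 c1) * Fb - (delta a0 b0 c0 a1 b1 c1) * Eb.
Definition q1 (a0 b0 c0 a1 b1 c1 : R) (s : R) : R := 1 + (delta a0 b0 c0 a1 b1 c1) * s.
Definition q2 (a0 b0 c0 a1 b1 c1 : R) (Eb Fb s : R) : R := Eb - (Delta a0 b0 c0 a1 b1 c1) Eb Fb * s.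
Definition p (a0 b0 c0 a1 b1 c1 : R) (Eb Fb s : R) : R :=
  (lambda a0 b0 c0 a1 b1 c1) * Fb * (q1 a0 b0 c0 a1 b1 c1) s + (q1 a0 b0 c0 a1 b1 c1) s * (q2 a0 b0 c0 a1 b1 c1) Eb Fb s + ((gamma a0 b0 c0 a1 b1 c1) + (delta a0 b0 c0 a1 b1 c1)) * Fb * (q2 a0 b0 c0 a1 b1 c1) Eb Fb s.
Definition phi (a0 b0 c0 a1 b1 c1 : R) (Eb Fb s : R) : R := s * (p a0 b0 c0 a1 b1 c1) Eb Fb s / ((q1 a0 b0 c0 a1 b1 c1) s * (q2 a0 b0 c0 a1 b1 c1) Eb Fb s).

Definition Gamma (a0 b0 c0 a1 b1 c1 : R) (Eb Fb s : R) : Prop :=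
  0 <= s /\ (0 < (Delta a0 b0 c0 a1 b1 c1) Eb Fb -> s < Eb / (Delta a0 b0 c0 a1 b1 c1) Eb Fb).


Definition continuous_on (D : R -> Prop) (f : R -> R) : Prop :=
  forall x, D x -> limit1_in f D (f x) x.

Definition nonneg_set (x : R) : Prop := 0 <= x.

(* Main.v *)
Require Import Defs.
From Stdlib Require Import Reals Lra Psatz ClassicalEpsilon.
Open Scope R_scope.

Definition Q1 d s := 1 + d*s.
Definition Dl d g Eb Fb := g*Fb - d*Eb.
Definition Q2 d g Eb Fb s := Eb - Dl d g Eb Fb * s.
Definition P d g l Eb Fb s :=
  l*Fb*Q1 d s + Q1 d s * Q2 d g Eb Fb s + (g+d)*Fb*Q2 d g Eb Fb s.
Definition Phi d g l Eb Fb s := s * P d g l Eb Fb s / (Q1 d s * Q2 d g Eb Fb s).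
Definition Gam d g Eb Fb s := 0 <= s /\ (0 < Dl d g Eb Fb -> s < Eb / Dl d g Eb Fb).
Definition SS d g l Eb Fb Sb E S0 S1 F Y0 Y1 : Prop :=
  Y0 = g*F*S1 /\ Y1 = d*F*S1 /\ l*F*S1 = S0*E /\ Fb = F+Y1 /\ Eb = E+Y0 /\
  Sb = S0+S1+Y0+Y1.
Definition BM d g l Eb Fb Sb E S0 S1 F Y0 Y1 : Prop :=
  0 < Eb /\ 0 < Fb /\ 0 < Sb /\ SS d g l Eb Fb Sb E S0 S1 F Y0 Y1 /\
  0 <= E /\ 0 <= S0 /\ 0 <= S1 /\ 0 <= F /\ 0 <= Y0 /\ 0 <= Y1.

Lemma Gam_iff d g Eb Fb x : 0 < Eb ->
  Gam d g Eb Fb x <-> 0 <= x /\ 0 < Q2 d g Eb Fb x.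
Proof.
  intro hE. unfold Gam, Q2. set (D := Dl d g Eb Fb). split.
  - intros [h1 h2]. split; auto. destruct (Rlt_or_le 0 D) as [hD|hD].
    + specialize (h2 hD). assert (x * D < Eb / D * D) by (apply Rmult_lt_compat_r; lra).
      unfold Rdiv in H; rewrite Rmult_assoc, Rinv_l in H; nra.
    + nra.
  - intros [h1 h2]. split; auto. intro hD.
    apply Rmult_lt_reg_r with D; auto. unfold Rdiv; rewrite Rmult_assoc, Rinv_l; lra.
Qed.

Lemma Rdiv_le_0_compat x y : 0 <= x -> 0 < y -> 0 <= x / y.
Proof. intros. unfold Rdiv. apply Rmult_le_pos; auto. left; apply Rinv_0_lt_compat; auto. Qed.

Lemma div_le_cross x y a b : 0 < a -> 0 < b -> x * b <= y * a -> x / a <= y / b.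
Proof.
  intros ha hb h. apply Rmult_le_reg_r with (a*b). nra.
  replace (x / a * (a*b)) with (x*b) by (field; lra).
  replace (y / b * (a*b)) with (y*a) by (field; lra). lra.
Qed.

Lemma Phi_eq d g l Eb Fb x : 0 < Q1 d x -> 0 < Q2 d g Eb Fb x ->
  Phi d g l Eb Fb x = x + l*Fb*(x/Q2 d g Eb Fb x) + (g+d)*Fb*(x/Q1 d x).
Proof. intros h1 h2. unfold Phi, P. field. split; lra. Qed.

Lemma Gam_down d g Eb Fb x y : 0 < Eb -> Gam d g Eb Fb y -> 0 <= x <= y -> Gam d g Eb Fb x.
Proof.
  intros hE hy hx. rewrite Gam_iff in * by auto. destruct hy as [h1 h2]. split. lra.
  unfold Q2 in *. destruct (Rlt_or_le 0 (Dl d g Eb Fb)); nra.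
Qed.


Lemma Phi_mono d g l Eb Fb x y : 0 < d -> 0 < g -> 0 < l -> 0 < Eb -> 0 < Fb ->
  Gam d g Eb Fb x -> Gam d g Eb Fb y -> x < y -> Phi d g l Eb Fb x < Phi d g l Eb Fb y.
Proof.
  intros hd hg hl hE hF hx hy hxy. rewrite Gam_iff in hx, hy by auto.
  destruct hx as [hx1 hx2]; destruct hy as [hy1 hy2].
  assert (q1x : 0 < Q1 d x) by (unfold Q1; nra).
  assert (q1y : 0 < Q1 d y) by (unfold Q1; nra).
  rewrite !Phi_eq by auto.
  assert (x / Q2 d g Eb Fb x <= y / Q2 d g Eb Fb y).
  { apply div_le_cross; auto. unfold Q2. nra. }
  assert (x / Q1 d x <= y / Q1 d y).
  { apply div_le_cross; auto. unfold Q1. nra. }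
  assert (l*Fb*(x / Q2 d g Eb Fb x) <= l*Fb*(y / Q2 d g Eb Fb y))
    by (apply Rmult_le_compat_l; nra).
  assert ((g+d)*Fb*(x / Q1 d x) <= (g+d)*Fb*(y / Q1 d y))
    by (apply Rmult_le_compat_l; nra).
  lra.
Qed.

Lemma Phi_nonneg d g l Eb Fb x : 0 < d -> 0 < g -> 0 < l -> 0 < Eb -> 0 < Fb ->
  Gam d g Eb Fb x -> 0 <= Phi d g l Eb Fb x.
Proof.
  intros hd hg hl hE hF hx. rewrite Gam_iff in hx by auto. destruct hx as [hx1 hx2].
  assert (q1x : 0 < Q1 d x) by (unfold Q1; nra).
  rewrite Phi_eq by auto.
  assert (0 <= x / Q2 d g Eb Fb x) by (apply Rdiv_le_0_compat; lra).
  assert (0 <= x / Q1 d x) by (apply Rdiv_le_0_compat; lra).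
  assert (0 <= l*Fb*(x / Q2 d g Eb Fb x)) by (apply Rmult_le_pos; nra).
  assert (0 <= (g+d)*Fb*(x / Q1 d x)) by (apply Rmult_le_pos; nra).
  lra.
Qed.

Lemma Phi_0 d g l Eb Fb : Phi d g l Eb Fb 0 = 0.
Proof. unfold Phi. rewrite Rmult_0_l. unfold Rdiv. apply Rmult_0_l. Qed.

Lemma Phi_inj d g l Eb Fb x y : 0 < d -> 0 < g -> 0 < l -> 0 < Eb -> 0 < Fb ->
  Gam d g Eb Fb x -> Gam d g Eb Fb y -> Phi d g l Eb Fb x = Phi d g l Eb Fb y -> x = y.
Proof.
  intros. destruct (Rtotal_order x y) as [h|[h|h]]; auto.
  - pose proof (Phi_mono d g l Eb Fb x y); intuition lra.
  - pose proof (Phi_mono d g l Eb Fb y x); intuition lra.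
Qed.

Lemma Phi_big d g l Eb Fb y : 0 < d -> 0 < g -> 0 < l -> 0 < Eb -> 0 < Fb -> 0 < y ->
  exists b, Gam d g Eb Fb b /\ 0 < b /\ y < Phi d g l Eb Fb b.
Proof.
  intros hd hg hl hE hF hy.
  destruct (Rlt_or_le 0 (Dl d g Eb Fb)) as [hD|hD].
  - set (D := Dl d g Eb Fb) in *.
    set (b := y*Eb/(l*Fb + y*D)).
    assert (hlF : 0 < l*Fb) by (apply Rmult_lt_0_compat; lra).
    assert (hyD : 0 < y*D) by (apply Rmult_lt_0_compat; lra).
    assert (hEl : 0 < Eb*(l*Fb)) by (apply Rmult_lt_0_compat; lra).
    assert (hb : 0 < b) by (unfold b; apply Rdiv_lt_0_compat; nra).
    assert (hq2 : Q2 d g Eb Fb b = Eb*(l*Fb)/(l*Fb+y*D)).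
    { unfold Q2, b. fold D. field. nra. }
    assert (0 < Q2 d g Eb Fb b) by (rewrite hq2; apply Rdiv_lt_0_compat; nra).
    exists b. split. rewrite Gam_iff; auto; split; lra. split; auto.
    assert (q1 : 0 < Q1 d b) by (unfold Q1; nra).
    rewrite Phi_eq by auto.
    assert (l*Fb*(b/Q2 d g Eb Fb b) = y).
    { rewrite hq2. unfold b. field. split; nra. }
    assert (0 <= b / Q1 d b) by (apply Rdiv_le_0_compat; lra).
    assert (0 <= (g+d)*Fb*(b / Q1 d b)) by (apply Rmult_le_pos; nra).
    lra.
  - exists (y+1).
    assert (0 < Q2 d g Eb Fb (y+1)) by (unfold Q2; nra).
    split. rewrite Gam_iff; auto; split; lra. split. lra.
    assert (q1 : 0 < Q1 d (y+1)) by (unfold Q1; nra).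
    rewrite Phi_eq by auto.
    assert (0 <= (y+1) / Q1 d (y+1)) by (apply Rdiv_le_0_compat; lra).
    assert (0 <= (y+1) / Q2 d g Eb Fb (y+1)) by (apply Rdiv_le_0_compat; lra).
    assert (0 <= (g+d)*Fb*((y+1) / Q1 d (y+1))) by (apply Rmult_le_pos; nra).
    assert (0 <= l*Fb*((y+1) / Q2 d g Eb Fb (y+1))) by (apply Rmult_le_pos; nra).
    lra.
Qed.

Lemma Phi_surj d g l Eb Fb y : 0 < d -> 0 < g -> 0 < l -> 0 < Eb -> 0 < Fb -> 0 <= y ->
  exists x, Gam d g Eb Fb x /\ Phi d g l Eb Fb x = y.
Proof.
  intros hd hg hl hE hF hy.
  destruct (Req_dec y 0) as [->|hy0].
  { exists 0. split. split; [lra| intros; apply Rdiv_lt_0_compat; auto]. apply Phi_0. }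
  destruct (Phi_big d g l Eb Fb y) as [b [hGb [hb hPb]]]; auto; try lra.
  pose (f := fun s => s * P d g l Eb Fb s - y * (Q1 d s * Q2 d g Eb Fb s)).
  assert (cf : continuity f).
  { unfold f, P, Q1, Q2. reg. }
  assert (hGb' := hGb). rewrite Gam_iff in hGb' by auto. destruct hGb' as [_ hq2b].
  assert (q1 : 0 < Q1 d b) by (unfold Q1; nra).
  assert (f0 : f 0 < 0).
  { unfold f, Q1, Q2. nra. }
  assert (fb : 0 < f b).
  { unfold f.
    assert (b * P d g l Eb Fb b = Phi d g l Eb Fb b * (Q1 d b * Q2 d g Eb Fb b)).
    { unfold Phi. field. split; lra. }
    rewrite H. assert (0 < Q1 d b * Q2 d g Eb Fb b) by (apply Rmult_lt_0_compat; lra).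
    assert (0 < (Phi d g l Eb Fb b - y) * (Q1 d b * Q2 d g Eb Fb b))
      by (apply Rmult_lt_0_compat; lra).
    lra. }
  destruct (IVT f 0 b cf hb f0 fb) as [z [hz fz]].
  assert (hGz : Gam d g Eb Fb z) by (apply Gam_down with b; auto).
  exists z. split; auto.
  assert (hGz' := hGz). rewrite Gam_iff in hGz' by auto. destruct hGz' as [_ hq2z].
  assert (q1z : 0 < Q1 d z) by (unfold Q1; nra).
  unfold f in fz. unfold Phi.
  replace (z * P d g l Eb Fb z) with (y * (Q1 d z * Q2 d g Eb Fb z)) by lra.
  field. split; lra.
Qed.

Lemma cpt_lim (D : R -> Prop) f x : continuity_pt f x -> limit1_in f D (f x) x.
Proof.
  unfold continuity_pt, continue_in, limit1_in, limit_in. intros H eps He.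
  destruct (H eps He) as [a [Ha Hf]]. exists a. split; auto.
  intros y [Dy Hy]. destruct (Req_dec y x) as [->|hne].
  - simpl. unfold R_dist. rewrite Rminus_diag, Rabs_R0. lra.
  - apply Hf. split; auto. unfold D_x, no_cond. split; auto.
Qed.

Lemma Phi_cont d g l Eb Fb : 0 < d -> 0 < g -> 0 < l -> 0 < Eb -> 0 < Fb ->
  continuous_on (Gam d g Eb Fb) (Phi d g l Eb Fb).
Proof.
  intros hd hg hl hE hF x hx. apply cpt_lim.
  rewrite Gam_iff in hx by auto. destruct hx as [hx1 hx2].
  assert (q1 : 0 < Q1 d x) by (unfold Q1; nra).
  unfold Q1, Q2 in *. unfold Phi, P, Q1, Q2. reg. nra.
Qed.

Lemma Gam_right d g Eb Fb x eps : 0 < Eb -> Gam d g Eb Fb x -> 0 < eps ->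
  exists e, 0 < e < eps /\ Gam d g Eb Fb (x + e).
Proof.
  intros hE hx he. rewrite Gam_iff in hx by auto. destruct hx as [hx1 hx2].
  unfold Q2 in hx2. set (D := Dl d g Eb Fb) in *.
  destruct (Rlt_or_le 0 D) as [hD|hD].
  - set (m := Rmin (eps/2) ((Eb - D*x)/(2*D))).
    assert (m1 : m <= eps/2) by apply Rmin_l.
    assert (m2 : m <= (Eb - D*x)/(2*D)) by apply Rmin_r.
    assert (m0 : 0 < m).
    { unfold m. apply Rmin_glb_lt. lra. apply Rdiv_lt_0_compat; lra. }
    exists m. split. lra. rewrite Gam_iff by auto. split. lra. unfold Q2. fold D.
    assert (D * m <= (Eb - D*x)/2).
    { replace ((Eb - D*x)/2) with (D * ((Eb - D*x)/(2*D))) by (field; lra).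
      apply Rmult_le_compat_l; lra. }
    nra.
  - exists (eps/2). split. lra. rewrite Gam_iff by auto. split. lra. unfold Q2. fold D. nra.
Qed.

Lemma inv_cont (G : R -> Prop) (f h : R -> R) :
  (forall x y, G x -> G y -> x < y -> f x < f y) ->
  (forall y, 0 <= y -> G (h y) /\ f (h y) = y) ->
  (forall x y, G y -> 0 <= x <= y -> G x) ->
  (forall x, G x -> 0 <= x) ->
  (forall x eps, G x -> 0 < eps -> exists e, 0 < e < eps /\ G (x + e)) ->
  continuous_on nonneg_set h.
Proof.
  intros mono hh down pos right y0 hy0. unfold nonneg_set in hy0.
  unfold limit1_in, limit_in. intros eps heps. simpl. unfold R_dist.
  destruct (hh y0 hy0) as [G0 f0]. set (x0 := h y0) in *.
  destruct (right x0 eps G0 heps) as [e [he Gb]].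
  assert (fb : y0 < f (x0 + e)) by (rewrite <- f0; apply mono; auto; lra).
  assert (up : forall y, 0 <= y -> y < f (x0+e) -> h y < x0 + e).
  { intros y hy hyb. destruct (hh y hy) as [Gy fy].
    destruct (Rlt_or_le (h y) (x0+e)) as [?|hle]; auto.
    destruct (Req_dec (h y) (x0+e)) as [heq|hne].
    - rewrite <- heq in hyb. lra.
    - assert (f (x0+e) < f (h y)) by (apply mono; auto; lra). lra. }
  destruct (Rle_lt_dec 0 (x0 - e)) as [ha|ha].
  - assert (Ga : G (x0 - e)) by (apply down with x0; auto; lra).
    assert (fa : f (x0 - e) < y0) by (rewrite <- f0; apply mono; auto; lra).
    assert (lo : forall y, 0 <= y -> f (x0-e) < y -> x0 - e < h y).
    { intros y hy hyb. destruct (hh y hy) as [Gy fy].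
      destruct (Rlt_or_le (x0-e) (h y)) as [?|hle]; auto.
      destruct (Req_dec (h y) (x0-e)) as [heq|hne].
      - rewrite heq in fy. lra.
      - assert (f (h y) < f (x0-e)) by (apply mono; auto; lra). lra. }
    exists (Rmin (y0 - f (x0-e)) (f (x0+e) - y0)). split.
    + apply Rmin_glb_lt; lra.
    + intros y [hy hd]. unfold nonneg_set in hy.
      assert (m1 := Rmin_l (y0 - f (x0-e)) (f (x0+e) - y0)).
      assert (m2 := Rmin_r (y0 - f (x0-e)) (f (x0+e) - y0)).
      apply Rabs_def2 in hd. destruct hd.
      assert (h y < x0 + e) by (apply up; auto; lra).
      assert (x0 - e < h y) by (apply lo; auto; lra).
      apply Rabs_def1; lra.
  - exists (f (x0+e) - y0). split. lra.
    intros y [hy hd]. unfold nonneg_set in hy. apply Rabs_def2 in hd. destruct hd.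
    assert (h y < x0 + e) by (apply up; auto; lra).
    destruct (hh y hy) as [Gy _]. pose proof (pos _ Gy).
    apply Rabs_def1; lra.
Qed.

Lemma BM_char d g l Eb Fb Sb E S0 S1 F Y0 Y1 :
  0 < d -> 0 < g -> 0 < l ->
  BM d g l Eb Fb Sb E S0 S1 F Y0 Y1 ->
  Gam d g Eb Fb S1 /\ Phi d g l Eb Fb S1 = Sb /\
  F = Fb / Q1 d S1 /\ E = Q2 d g Eb Fb S1 / Q1 d S1 /\
  Y0 = g*F*S1 /\ Y1 = d*F*S1 /\ S0 = l*F*S1/E.
Proof.
  intros hd hg hl [hE [hF [hS [[e1 [e2 [e3 [e4 [e5 e6]]]]] [pE [pS0 [pS1 [pF [pY0 pY1]]]]]]]]].
  assert (q1 : 0 < Q1 d S1) by (unfold Q1; nra).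
  assert (hFq : F * Q1 d S1 = Fb) by (unfold Q1; subst; ring).
  assert (hEq : E * Q1 d S1 = Q2 d g Eb Fb S1).
  { unfold Q1, Q2, Dl. subst Y0 Y1 Fb. rewrite e5. ring. }
  assert (Fp : 0 < F) by nra.
  assert (q2 : 0 < Q2 d g Eb Fb S1).
  { destruct (Rle_lt_dec E 0).
    - assert (E = 0) by lra. subst E.
      assert (S1 = 0) by nra. subst S1.
      unfold Q2 in *. nra.
    - nra. }
  assert (Ep : 0 < E) by nra.
  assert (eF : F = Fb / Q1 d S1) by (rewrite <- hFq; field; lra).
  assert (eE : E = Q2 d g Eb Fb S1 / Q1 d S1) by (rewrite <- hEq; field; lra).
  assert (eS0 : S0 = l*F*S1/E) by (rewrite e3; field; lra).
  split. rewrite Gam_iff by auto. split; auto.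
  split; [|repeat split; auto].
  rewrite Phi_eq by auto. rewrite e6, e1, e2, eS0, eE, eF. field. split; lra.
Qed.

Lemma main_abstract d g l Eb Fb (hd : 0 < d) (hg : 0 < g) (hl : 0 < l)
  (hEb : 0 < Eb) (hFb : 0 < Fb) :
  (forall Sb, 0 < Sb ->
     exists E S0 S1 F Y0 Y1,
       BM d g l Eb Fb Sb E S0 S1 F Y0 Y1 /\
       forall E' S0' S1' F' Y0' Y1',
         BM d g l Eb Fb Sb E' S0' S1' F' Y0' Y1' ->
         E' = E /\ S0' = S0 /\ S1' = S1 /\ F' = F /\ Y0' = Y0 /\ Y1' = Y1) /\
  continuous_on (Gam d g Eb Fb) (Phi d g l Eb Fb) /\
  (forall x y, Gam d g Eb Fb x -> Gam d g Eb Fb y ->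
     x < y -> Phi d g l Eb Fb x < Phi d g l Eb Fb y) /\
  (forall x, Gam d g Eb Fb x -> 0 <= Phi d g l Eb Fb x) /\
  (forall y, 0 <= y -> exists x, Gam d g Eb Fb x /\ Phi d g l Eb Fb x = y) /\
  exists psi : R -> R,
    (forall y, 0 <= y -> Gam d g Eb Fb (psi y) /\ Phi d g l Eb Fb (psi y) = y) /\
    (forall x, Gam d g Eb Fb x -> psi (Phi d g l Eb Fb x) = x) /\
    continuous_on nonneg_set psi /\
    (forall y z, 0 <= y -> 0 <= z -> y < z -> psi y < psi z) /\
    psi 0 = 0 /\
    (forall Sb, 0 < Sb -> forall E S0 S1 F Y0 Y1,
       BM d g l Eb Fb Sb E S0 S1 F Y0 Y1 -> S1 = psi Sb).
Proof.
  set (psi := fun y => epsilon (inhabits 0) (fun x => Gam d g Eb Fb x /\ Phi d g l Eb Fb x = y)).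
  assert (hpsi : forall y, 0 <= y -> Gam d g Eb Fb (psi y) /\ Phi d g l Eb Fb (psi y) = y).
  { intros y hy. unfold psi. apply epsilon_spec. apply Phi_surj; auto. }
  assert (inj := fun x y => Phi_inj d g l Eb Fb x y hd hg hl hEb hFb).
  assert (pinv : forall x, Gam d g Eb Fb x -> psi (Phi d g l Eb Fb x) = x).
  { intros x hx. destruct (hpsi (Phi d g l Eb Fb x)) as [h1 h2].
    apply Phi_nonneg; auto. apply inj; auto. }
  split.
  { intros Sb hS.
    destruct (hpsi Sb) as [hG hP]. lra. set (s := psi Sb) in *.
    assert (hG' := hG). rewrite Gam_iff in hG' by auto. destruct hG' as [s0 q2].
    assert (q1 : 0 < Q1 d s) by (unfold Q1; nra).
    set (F := Fb / Q1 d s). set (E := Q2 d g Eb Fb s / Q1 d s).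
    assert (Fp : 0 < F) by (apply Rdiv_lt_0_compat; auto).
    assert (Ep : 0 < E) by (apply Rdiv_lt_0_compat; auto).
    exists E, (l*F*s/E), s, F, (g*F*s), (d*F*s).
    assert (hBM : BM d g l Eb Fb Sb E (l*F*s/E) s F (g*F*s) (d*F*s)).
    { unfold BM, SS. repeat split; auto; try lra.
      - field. lra.
      - unfold F. unfold Q1. field. unfold Q1 in q1. lra.
      - unfold E, F. unfold Q2, Q1, Dl. field. unfold Q1 in q1. lra.
      - rewrite <- hP. rewrite Phi_eq by auto. unfold E, F. field. split; lra.
      - apply Rdiv_le_0_compat; [apply Rmult_le_pos; [apply Rmult_le_pos|]|]; lra.
      - apply Rmult_le_pos; [apply Rmult_le_pos|]; lra.
      - apply Rmult_le_pos; [apply Rmult_le_pos|]; lra. }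
    split; auto.
    intros E' S0' S1' F' Y0' Y1' hB.
    destruct (BM_char _ _ _ _ _ _ _ _ _ _ _ _ hd hg hl hB) as [g1 [g2 [g3 [g4 [g5 [g6 g7]]]]]].
    assert (S1' = s) by (apply inj; auto; lra). subst S1'.
    assert (F' = F) by (rewrite g3; reflexivity).
    assert (E' = E) by (rewrite g4; reflexivity).
    subst E' F'. rewrite g5, g6, g7. repeat split; auto. }
  split. apply Phi_cont; auto.
  split. intros; apply Phi_mono; auto.
  split. intros; apply Phi_nonneg; auto.
  split. intros; apply Phi_surj; auto.
  exists psi. split; auto. split; auto.
  split.
  { apply inv_cont with (G := Gam d g Eb Fb) (f := Phi d g l Eb Fb); auto.
    - intros; apply Phi_mono; auto.
    - intros; apply Gam_down with y; auto.
    - intros x [hx _]; auto.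
    - intros; apply Gam_right; auto. }
  split.
  { intros y z hy hz hyz. destruct (hpsi y hy) as [a1 a2]. destruct (hpsi z hz) as [b1 b2].
    destruct (Rlt_or_le (psi y) (psi z)) as [?|hle]; auto.
    destruct (Req_dec (psi y) (psi z)) as [heq|hne].
    - rewrite heq in a2. lra.
    - assert (Phi d g l Eb Fb (psi z) < Phi d g l Eb Fb (psi y)) by (apply Phi_mono; auto; lra).
      lra. }
  split.
  { rewrite <- (Phi_0 d g l Eb Fb) at 1. apply pinv.
    split. lra. intros; apply Rdiv_lt_0_compat; auto. }
  intros Sb hS E S0 S1 F Y0 Y1 hB.
  destruct (BM_char _ _ _ _ _ _ _ _ _ _ _ _ hd hg hl hB) as [g1 [g2 _]].
  rewrite <- g2. symmetry. apply pinv; auto.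
Qed.

Theorem mainTheorem3 (a0 b0 c0 a1 b1 c1 : R)
  (ha0 : 0 < a0) (hb0 : 0 < b0) (hc0 : 0 < c0)
  (ha1 : 0 < a1) (hb1 : 0 < b1) (hc1 : 0 < c1)
  (Eb Fb : R) (hEb : 0 < Eb) (hFb : 0 < Fb) :
  (* (i) unique BMSS for every positive Sb *)
  (forall Sb, 0 < Sb ->
     exists E S0 S1 F Y0 Y1,
       BMSS a0 b0 c0 a1 b1 c1 Eb Fb Sb E S0 S1 F Y0 Y1 /\
       forall E' S0' S1' F' Y0' Y1',
         BMSS a0 b0 c0 a1 b1 c1 Eb Fb Sb E' S0' S1' F' Y0' Y1' ->
         E' = E /\ S0' = S0 /\ S1' = S1 /\ F' = F /\ Y0' = Y0 /\ Y1' = Y1) /\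
  (* (ii) phi restricted to Gamma is a continuous increasing bijection onto [0,oo) *)
  continuous_on (Gamma a0 b0 c0 a1 b1 c1 Eb Fb) (phi a0 b0 c0 a1 b1 c1 Eb Fb) /\
  (forall x y, Gamma a0 b0 c0 a1 b1 c1 Eb Fb x -> Gamma a0 b0 c0 a1 b1 c1 Eb Fb y ->
     x < y -> phi a0 b0 c0 a1 b1 c1 Eb Fb x < phi a0 b0 c0 a1 b1 c1 Eb Fb y) /\
  (forall x, Gamma a0 b0 c0 a1 b1 c1 Eb Fb x -> 0 <= phi a0 b0 c0 a1 b1 c1 Eb Fb x) /\
  (forall y, 0 <= y -> exists x, Gamma a0 b0 c0 a1 b1 c1 Eb Fb x /\
     phi a0 b0 c0 a1 b1 c1 Eb Fb x = y) /\
  (* its inverse psi : [0,oo) -> Gamma *)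
  exists psi : R -> R,
    (forall y, 0 <= y -> Gamma a0 b0 c0 a1 b1 c1 Eb Fb (psi y) /\
       phi a0 b0 c0 a1 b1 c1 Eb Fb (psi y) = y) /\
    (forall x, Gamma a0 b0 c0 a1 b1 c1 Eb Fb x -> psi (phi a0 b0 c0 a1 b1 c1 Eb Fb x) = x) /\
    continuous_on nonneg_set psi /\
    (forall y z, 0 <= y -> 0 <= z -> y < z -> psi y < psi z) /\
    psi 0 = 0 /\
    (forall Sb, 0 < Sb -> forall E S0 S1 F Y0 Y1,
       BMSS a0 b0 c0 a1 b1 c1 Eb Fb Sb E S0 S1 F Y0 Y1 -> S1 = psi Sb).
Proof.
  assert (hd : 0 < delta a0 b0 c0 a1 b1 c1) by (unfold delta; apply Rdiv_lt_0_compat; lra).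
  assert (hg : 0 < gamma a0 b0 c0 a1 b1 c1)
    by (unfold gamma; apply Rmult_lt_0_compat; [apply Rdiv_lt_0_compat|]; lra).
  assert (hl : 0 < lambda a0 b0 c0 a1 b1 c1)
    by (unfold lambda; apply Rmult_lt_0_compat; [apply Rdiv_lt_0_compat|]; lra).
  exact (main_abstract _ _ _ Eb Fb hd hg hl hEb hFb).
Qed.
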